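(* Let $R>1$ and let $f,g:\mathbb{D}_{R}\to\mathbb{C}$ be analytic in $\mathbb{D}_{R}=\{z\in\mathbb{C}:|z|<R\}$, $f(z)=\sum_{k=0}^{\infty}a_{k}z^{k}$, $g(z)=\sum_{k=0}^{\infty}b_{k}z^{k}$ for $z\in\mathbb{D}_{R}$. Let $1\le r<R$. Then $\sum_{m=0}^{\infty}m^{2}\big[\sum_{j=0}^{m}|a_{j}||b_{m-j}|\big]r^{m-1}<+\infty$ and for all $n\in\mathbb{N}$, $$\|B_{n}(fg)-B_{n}(f)B_{n}(g)\|_{r}\le\frac{6(1+r)}{n}\sum_{m=0}^{\infty}m^{2}\Big[\sum_{j=0}^{m}|a_{j}||b_{m-j}|\Big]r^{m-1}.$$
   Context: For a function $h$ defined on $[0,1]$ (here the restriction of an analytic function), the complex Bernstein polynomials are $B_{n}(h)(z)=\sum_{k=0}^{n}\binom{n}{k}z^{k}(1-z)^{n-k}h(k/n)$, $z\in\mathbb{C}$. For $h$ continuous on $\{|z|\le r\}$, $\|h\|_{r}=\max\{|h(z)|:|z|\le r\}$. *)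

(* Defs.v *)
From Stdlib Require Import Reals.
From Coquelicot Require Import Coquelicot.

Open Scope R_scope.

Fixpoint cpow (z : C) (k : nat) : C :=
  match k with
  | O => 1%C
  | S k' => Cmult z (cpow z k')
  end.

Definition power_series_on (R0 : R) (a : nat -> C) (f : C -> C) : Prop :=
  forall z : C, Cmod z < R0 -> is_series (fun k => Cmult (a k) (cpow z k)) (f z).

Definition bernstein (n : nat) (h : C -> C) (z : C) : C :=
  sum_n (fun k => Cmult (RtoC (Binomial.C n k))
                   (Cmult (cpow z k)
                    (Cmult (cpow (Cminus 1%C z) (n - k))
                           (h (RtoC (INR k / INR n)))))) n.

Definition sup_norm (r : R) (h : C -> C) : Rbar :=
  Lub_Rbar (fun t => exists z : C, Cmod z <= r /\ t = Cmod (h z)).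

Definition bound_term (a b : nat -> C) (r : R) (m : nat) : R :=
  INR m ^ 2 * sum_n (fun j => Cmod (a j) * Cmod (b (m - j)%nat)) m * r ^ (m - 1).

(* Main.v *)
Require Import Defs.
From Stdlib Require Import Reals.
From Coquelicot Require Import Coquelicot.
From Stdlib Require Import Lra Lia.
Open Scope R_scope.

Lemma cpow_Cpow z k : cpow z k = Cpow z k.
Proof. induction k; simpl; auto. Qed.

Fixpoint binom (n k : nat) : R :=
  match n, k with
  | _, O => 1
  | O, S _ => 0
  | S n', S k' => binom n' k' + binom n' (S k')
  end.

Lemma binom_gt n k : (n < k)%nat -> binom n k = 0.
Proof.
  revert k; induction n; intros k H; destruct k; simpl; try lia; auto.
  rewrite !IHn; try lia; lra.
Qed.

Lemma binom_C n k : (k <= n)%nat -> Binomial.C n k = binom n k.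
Proof.
  revert k; induction n; intros k H.
  - destruct k; [|lia]. simpl. apply C_n_0.
  - destruct k. rewrite C_n_0; reflexivity.
    destruct (Nat.eq_dec k n) as [->|Hne].
    + rewrite C_n_n. simpl. rewrite (binom_gt n (S n)) by lia.
      rewrite <- IHn by lia. rewrite C_n_n. lra.
    + rewrite <- pascal by lia. simpl. rewrite !IHn by lia. reflexivity.
Qed.

Lemma binom_n_0 n : binom n 0 = 1.
Proof. destruct n; reflexivity. Qed.

Lemma binom_ge0 n k : 0 <= binom n k.
Proof. revert k; induction n; destruct k; simpl; try lra.
  specialize (IHn k) as H1; specialize (IHn (S k)) as H2; lra. Qed.

Lemma binom_n_n n : binom n n = 1.
Proof. induction n; simpl; [reflexivity|]. rewrite IHn, binom_gt by lia. lra. Qed.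

Lemma sum_n_shift {G : AbelianMonoid} (a : nat -> G) n :
  sum_n a (S n) = plus (a O) (sum_n (fun k => a (S k)) n).
Proof.
  induction n. rewrite sum_Sn, !sum_O; auto.
  rewrite sum_Sn, IHn, sum_Sn. now rewrite plus_assoc.
Qed.

Lemma sumC_mult_l (a : C) u n : Cmult a (sum_n u n) = sum_n (fun k => Cmult a (u k)) n.
Proof. symmetry. exact (@sum_n_mult_l C_Ring a u n). Qed.
Lemma sumC_mult_r (a : C) u n : Cmult (sum_n u n) a = sum_n (fun k => Cmult (u k) a) n.
Proof. symmetry. exact (@sum_n_mult_r C_Ring a u n). Qed.
Lemma sumC_plus (u v : nat -> C) n : Cplus (sum_n u n) (sum_n v n) = sum_n (fun k => Cplus (u k) (v k)) n.
Proof. symmetry. exact (@sum_n_plus C_AbelianMonoid u v n). Qed.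
Lemma sumC_Sn (u : nat -> C) n : sum_n u (S n) = Cplus (sum_n u n) (u (S n)).
Proof. exact (sum_Sn u n). Qed.
Lemma sumC_shift (u : nat -> C) n : sum_n u (S n) = Cplus (u O) (sum_n (fun k => u (S k)) n).
Proof. exact (sum_n_shift u n). Qed.
Lemma sumC_O (u : nat -> C) : sum_n u O = u O.
Proof. exact (sum_O u). Qed.

Ltac rring := repeat match goal with |- context [@sum_n R_AbelianMonoid ?f ?n] =>
   let s := fresh "s" in generalize (@sum_n R_AbelianMonoid f n); intro s; change R in s end;
   match goal with |- ?a = ?b => change (@eq R a b) end; ring.
Ltac cring := repeat match goal with |- context [@sum_n C_AbelianMonoid ?f ?n] =>
   let s := fresh "s" in generalize (@sum_n C_AbelianMonoid f n); intro s; change C in s end;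
   match goal with |- ?a = ?b => change (@eq C a b) end; ring.

Section E.
Variable z : C.

Definition En (n : nat) (h : nat -> C) : C :=
  sum_n (fun k => Cmult (RtoC (binom n k))
                   (Cmult (cpow z k) (Cmult (cpow (Cminus 1%C z) (n - k)) (h k)))) n.

Lemma En_step n h :
  En (S n) h = (Cmult (Cminus 1 z) (En n h) + Cmult z (En n (fun k => h (S k))))%C.
Proof.
  unfold En.
  set (G := fun k => Cmult (RtoC (binom n k))
            (Cmult (cpow z k) (Cmult (cpow (Cminus 1%C z) (S n - k)) (h k)))).
  assert (HG : Cmult (Cminus 1 z) (sum_n (fun k => Cmult (RtoC (binom n k))
                   (Cmult (cpow z k) (Cmult (cpow (Cminus 1%C z) (n - k)) (h k)))) n)
             = plus (G O) (sum_n (fun k => G (S k)) n)).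
  { rewrite <- sum_n_shift, sum_Sn.
    assert (G (S n) = 0%C) as -> by (unfold G; rewrite binom_gt by lia; ring).
    change plus with Cplus. rewrite Cplus_0_r. rewrite sumC_mult_l.
    apply sum_n_ext_loc. intros k Hk. unfold G. replace (S n - k)%nat with (S (n - k)) by lia.
    simpl. change mult with Cmult. ring. }
  rewrite HG. rewrite sumC_mult_l.
  rewrite sum_n_shift. unfold G. simpl Nat.sub.
  change plus with Cplus. change mult with Cmult.
  rewrite <- Cplus_assoc. f_equal; [now rewrite !binom_n_0|]. rewrite sumC_plus.
  apply sum_n_ext. intros k. change plus with Cplus. simpl. rewrite RtoC_plus. ring.
Qed.

Lemma En_ext n h1 h2 : (forall k, h1 k = h2 k) -> En n h1 = En n h2.
Proof. intros H; unfold En; apply sum_n_ext; intros k; now rewrite H. Qed.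

Lemma En_plus n h1 h2 : En n (fun k => Cplus (h1 k) (h2 k)) = Cplus (En n h1) (En n h2).
Proof. unfold En. rewrite sumC_plus. apply sum_n_ext; intros k. cring. Qed.

Lemma En_scal n c h : En n (fun k => Cmult c (h k)) = Cmult c (En n h).
Proof. unfold En. rewrite sumC_mult_l. apply sum_n_ext; intros k. cring. Qed.

Lemma En_sum n (H : nat -> nat -> C) m :
  En n (fun k => sum_n (fun i => H i k) m) = sum_n (fun i => En n (H i)) m.
Proof.
  induction m.
  - rewrite sumC_O. apply En_ext. intros; apply sumC_O.
  - rewrite sumC_Sn, <- IHm, <- En_plus. apply En_ext. intros; apply sumC_Sn.
Qed.

Definition M n p := En n (fun k => RtoC (INR k ^ p)).

End E.

Lemma RtoC_sum (f : nat -> R) m : RtoC (sum_n f m) = sum_n (fun i => RtoC (f i)) m.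
Proof.
  induction m. rewrite sum_O, sumC_O; auto.
  rewrite sum_Sn, sumC_Sn, <- IHm. change plus with Rplus. now rewrite RtoC_plus.
Qed.

Lemma binomR (x : R) p : (x + 1) ^ p = sum_n (fun i => binom p i * x ^ i) p.
Proof.
  rewrite binomial, <- sum_n_Reals. apply sum_n_ext_loc. intros i Hi.
  rewrite binom_C by lia. rewrite pow1. rring.
Qed.

Lemma sumR_mult_l (a : R) u n : a * sum_n u n = sum_n (fun k => a * u k) n.
Proof. symmetry. exact (@sum_n_mult_l R_Ring a u n). Qed.
Lemma sumR_mult_r (a : R) u n : sum_n u n * a = sum_n (fun k => u k * a) n.
Proof. symmetry. exact (@sum_n_mult_r R_Ring a u n). Qed.
Lemma sumR_plus (u v : nat -> R) n : sum_n u n + sum_n v n = sum_n (fun k => u k + v k) n.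
Proof. symmetry. exact (@sum_n_plus R_AbelianMonoid u v n). Qed.
Lemma sumR_Sn (u : nat -> R) n : sum_n u (S n) = sum_n u n + u (S n).
Proof. exact (sum_Sn u n). Qed.
Lemma sumR_O (u : nat -> R) : sum_n u O = u O.
Proof. exact (sum_O u). Qed.

Section M.
Variable z : C.

Lemma M_step n p : M z (S n) p =
  Cplus (Cmult (Cminus 1 z) (M z n p)) (Cmult z (sum_n (fun i => Cmult (RtoC (binom p i)) (M z n i)) p)).
Proof.
  unfold M. rewrite En_step. f_equal. f_equal.
  erewrite sum_n_ext; [|intros i; rewrite <- En_scal; reflexivity].
  rewrite <- En_sum. apply En_ext. intros k.
  rewrite S_INR, binomR, RtoC_sum. apply sum_n_ext. intros i. now rewrite RtoC_mult.
Qed.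

Definition S2 n a b := sum_n (fun u => sum_n (fun v =>
   Cmult (RtoC (binom a u * binom b v)) (M z n (u + v))) b) a.

Lemma M_step2 n a b : M z (S n) (a + b) =
  Cplus (Cmult (Cminus 1 z) (M z n (a + b))) (Cmult z (S2 n a b)).
Proof.
  unfold S2, M. rewrite En_step. f_equal. f_equal.
  erewrite sum_n_ext; [|intros u; erewrite sum_n_ext; [|intros v; rewrite <- En_scal; reflexivity];
     rewrite <- En_sum; reflexivity].
  rewrite <- En_sum. apply En_ext. intros k.
  rewrite S_INR, pow_add, !binomR, sumR_mult_r, RtoC_sum. apply sum_n_ext. intros u.
  rewrite sumR_mult_l, RtoC_sum. apply sum_n_ext. intros v.
  rewrite !RtoC_mult, pow_add, RtoC_mult. cring.
Qed.

Definition Dl n a b := Cminus (M z n (a + b)) (Cmult (M z n a) (M z n b)).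
Definition Pn n a := sum_n (fun u => Cmult (RtoC (binom a u)) (M z n u)) a.
Definition SD n a b := sum_n (fun u => sum_n (fun v =>
   Cmult (RtoC (binom a u * binom b v)) (Dl n u v)) b) a.

Lemma S2_split n a b : S2 n a b = Cplus (SD n a b) (Cmult (Pn n a) (Pn n b)).
Proof.
  unfold S2, SD, Pn. rewrite sumC_mult_r, sumC_plus. apply sum_n_ext; intros u.
  rewrite sumC_mult_l, sumC_plus. apply sum_n_ext; intros v.
  unfold Dl. rewrite RtoC_mult. cring.
Qed.

Lemma Dl_step n a b : Dl (S n) a b =
  Cplus (Cplus (Cmult (Cminus 1 z) (Dl n a b)) (Cmult z (SD n a b)))
    (Cmult (Cmult z (Cminus 1 z)) (Cmult (Cminus (Pn n a) (M z n a)) (Cminus (Pn n b) (M z n b)))).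
Proof.
  unfold Dl at 1. rewrite M_step2, !M_step, S2_split. fold (Pn n a) (Pn n b).
  unfold Dl. cring.
Qed.

Lemma M_0 n : M z n 0 = 1%C.
Proof.
  induction n.
  - unfold M, En. rewrite sumC_O. simpl. cring.
  - rewrite M_step. simpl. rewrite sumC_O, IHn. simpl. cring.
Qed.

Lemma Dl_0 n b : Dl n 0 b = 0%C.
Proof. unfold Dl. simpl. rewrite M_0. cring. Qed.

End M.

Lemma Dl_0r z n a : Dl z n a 0 = 0%C.
Proof. unfold Dl. rewrite Nat.add_0_r, M_0. cring. Qed.

Lemma Cmod_sum (f : nat -> C) m : Cmod (sum_n f m) <= sum_n (fun i => Cmod (f i)) m.
Proof.
  induction m. rewrite sumC_O, sumR_O. lra.
  rewrite sumC_Sn, sumR_Sn. eapply Rle_trans. apply Cmod_triangle. lra.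
Qed.

Lemma sumR_le (f g : nat -> R) m : (forall i, (i <= m)%nat -> f i <= g i) -> sum_n f m <= sum_n g m.
Proof.
  induction m; intros H. rewrite !sumR_O. apply H; lia.
  rewrite !sumR_Sn. apply Rplus_le_compat. apply IHm; intros; apply H; lia. apply H; lia.
Qed.

Lemma sumR_ge0 (f : nat -> R) m : (forall i, (i <= m)%nat -> 0 <= f i) -> 0 <= sum_n f m.
Proof.
  induction m; intros H. rewrite !sumR_O. apply H; lia.
  rewrite !sumR_Sn. apply Rplus_le_le_0_compat. apply IHm; intros; apply H; lia. apply H; lia.
Qed.

Lemma Cmod_RtoC_nonneg x : 0 <= x -> Cmod (RtoC x) = x.
Proof. intros; rewrite Cmod_R, Rabs_pos_eq; auto. Qed.

Lemma pow_mono_r (r : R) i j : 1 <= r -> (i <= j)%nat -> r ^ i <= r ^ j.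
Proof. intros; apply Rle_pow; auto. Qed.

Section Bounds.
Variable z : C.
Variable r : R.
Hypothesis Hr : 1 <= r.
Hypothesis Hz : Cmod z <= r.

Lemma Cmod_1mz : Cmod (Cminus 1 z) <= 1 + r.
Proof. unfold Cminus. eapply Rle_trans. apply Cmod_triangle. rewrite Cmod_1, Cmod_opp. lra. Qed.

Lemma M_bound n p : Cmod (M z n p) <= (INR n * r) ^ p.
Proof.
  revert p; induction n; intros p.
  - replace (M z 0 p) with (RtoC (0 ^ p)).
    rewrite Cmod_R, Rmult_0_l, Rabs_pos_eq. simpl; lra. apply pow_le; lra.
    unfold M, En. rewrite sumC_O. simpl. cring.
  - destruct p as [|p]. rewrite M_0, Cmod_1. simpl; lra.
    rewrite M_step. 
    assert (E : Cplus (Cmult (Cminus 1 z) (M z n (S p)))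
     (Cmult z (sum_n (fun i => Cmult (RtoC (binom (S p) i)) (M z n i)) (S p)))
     = Cplus (M z n (S p)) (Cmult z (sum_n (fun i => Cmult (RtoC (binom (S p) i)) (M z n i)) p))).
    { rewrite sumC_Sn, binom_n_n. cring. }
    rewrite E. clear E.
    eapply Rle_trans. apply Cmod_triangle. rewrite Cmod_mult.
    assert (H1 : Cmod (sum_n (fun i => Cmult (RtoC (binom (S p) i)) (M z n i)) p)
        <= sum_n (fun i => binom (S p) i * (INR n) ^ i) p * r ^ p).
    { eapply Rle_trans. apply Cmod_sum. rewrite sumR_mult_r. apply sumR_le. intros i Hi.
      rewrite Cmod_mult, Cmod_RtoC_nonneg by apply binom_ge0.
      rewrite Rmult_assoc. apply Rmult_le_compat_l. apply binom_ge0.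
      eapply Rle_trans. apply IHn. rewrite Rpow_mult_distr. apply Rmult_le_compat_l.
      apply pow_le, pos_INR. apply pow_mono_r; auto; lia. }
    assert (Hb : (INR n + 1)^(S p) = sum_n (fun i => binom (S p) i * INR n^i) p + INR n^(S p))
      by (rewrite binomR, sumR_Sn, binom_n_n; ring).
    rewrite S_INR, Rpow_mult_distr, Hb.
    specialize (IHn (S p)). rewrite Rpow_mult_distr in IHn.
    replace ((sum_n (fun i => binom (S p) i * INR n ^ i) p + INR n ^ S p) * r ^ S p)
      with (INR n ^ S p * r ^ S p + r * (sum_n (fun i => binom (S p) i * INR n ^ i) p * r ^ p))
      by (simpl; ring).
    apply Rplus_le_compat. auto.
    apply Rmult_le_compat; auto; apply Cmod_ge_0.
Qed.
End Bounds.

Lemma sum2_split {G : AbelianMonoid} (F : nat -> nat -> G) a b :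
  sum_n (fun u => sum_n (F u) (S b)) (S a) =
  plus (plus (sum_n (fun u => sum_n (F u) (S b)) a) (sum_n (F (S a)) b)) (F (S a) (S b)).
Proof. rewrite sum_Sn, sum_Sn. now rewrite plus_assoc. Qed.

Definition Dr (x : R) a := x ^ a - (x - 1) ^ a.
Definition Phi n a b := 2 * INR n * Dr (INR n) a * Dr (INR n) b.

Lemma Dr_sum x a : sum_n (fun u => binom a u * Dr x u) a = Dr (x + 1) a.
Proof.
  unfold Dr. replace (x + 1 - 1) with ((x - 1) + 1) by ring.
  rewrite !binomR.
  transitivity (sum_n (fun u => binom a u * x ^ u) a + (-1) * sum_n (fun u => binom a u * (x - 1) ^ u) a).
  rewrite sumR_mult_l, sumR_plus. apply sum_n_ext; intros; simpl; rring. rring.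
Qed.

Lemma Dr_ge0 x a : 1 <= x -> 0 <= Dr x a.
Proof. intros; unfold Dr. assert (0 <= x - 1) by lra. 
  assert ((x-1)^a <= x^a) by (apply pow_incr; lra). lra. Qed.

Lemma Phi_ge0 n a b : 0 <= Phi n a b.
Proof.
  unfold Phi. destruct n. simpl; lra.
  assert (1 <= INR (S n)) by (rewrite S_INR; pose proof (pos_INR n); lra).
  pose proof (Dr_ge0 _ a H); pose proof (Dr_ge0 _ b H).
  apply Rmult_le_pos; [apply Rmult_le_pos|]; auto. apply Rmult_le_pos; lra.
Qed.

Lemma Dr_top x a : sum_n (fun u => binom (S a) u * x ^ u) a = Dr (x + 1) (S a).
Proof. unfold Dr. rewrite binomR, sumR_Sn, binom_n_n. replace (x + 1 - 1) with x by ring. rring. Qed.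

Lemma M_at0 z p : M z 0 p = RtoC (0 ^ p).
Proof. unfold M, En. rewrite sumC_O. simpl. cring. Qed.

Section Bounds2.
Variable z : C.
Variable r : R.
Hypothesis Hr : 1 <= r.
Hypothesis Hz : Cmod z <= r.

Lemma Pdiff_bound n a : Cmod (sum_n (fun u => Cmult (RtoC (binom (S a) u)) (M z n u)) a)
   <= r ^ a * Dr (INR n + 1) (S a).
Proof.
  rewrite <- Dr_top. eapply Rle_trans. apply Cmod_sum. rewrite sumR_mult_l. apply sumR_le.
  intros i Hi. rewrite Cmod_mult, Cmod_RtoC_nonneg by apply binom_ge0.
  eapply Rle_trans. apply Rmult_le_compat_l. apply binom_ge0. apply (M_bound z r Hr Hz).
  rewrite Rpow_mult_distr.
  replace (r ^ a * (binom (S a) i * INR n ^ i)) with (binom (S a) i * (INR n ^ i * r ^ a)) by ring.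
  apply Rmult_le_compat_l. apply binom_ge0. apply Rmult_le_compat_l. apply pow_le, pos_INR.
  apply pow_mono_r; auto.
Qed.

Lemma Dl_bound n : forall a b, Cmod (Dl z n a b) <= r ^ (a + b) * Phi n a b.
Proof.
  induction n; intros a b.
  - unfold Dl. rewrite !M_at0, <- RtoC_mult, <- RtoC_minus, pow_add.
    replace (0 ^ a * 0 ^ b - 0 ^ a * 0 ^ b) with 0 by ring. rewrite Cmod_R, Rabs_R0.
    unfold Phi; simpl; lra.
  - assert (Hrp : forall k, 0 <= r ^ k) by (intros; apply pow_le; lra).
    destruct a as [|a]. rewrite Dl_0, Cmod_0. apply Rmult_le_pos; auto. apply Phi_ge0.
    destruct b as [|b]. rewrite Dl_0r, Cmod_0. apply Rmult_le_pos; auto. apply Phi_ge0.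
    set (c := fun u v => Cmult (RtoC (binom (S a) u * binom (S b) v)) (Dl z n u v)).
    set (REST := Cplus (sum_n (fun u => sum_n (c u) (S b)) a) (sum_n (c (S a)) b)).
    assert (HSD : SD z n (S a) (S b) = Cplus REST (Dl z n (S a) (S b))).
    { replace (SD z n (S a) (S b)) with (sum_n (fun u => sum_n (c u) (S b)) (S a)) by reflexivity.
      rewrite (sum2_split (G:=C_AbelianMonoid) c a b). unfold c at 3.
      rewrite !binom_n_n. change plus with Cplus. unfold REST. rewrite Rmult_1_r. cring. }
    rewrite Dl_step, HSD.
    unfold Pn. rewrite sumC_Sn, sumC_Sn, !binom_n_n.
    match goal with |- Cmod ?e <= _ =>
      replace e with (Cplus (Cplus (Dl z n (S a) (S b)) (Cmult z REST))
       (Cmult (Cmult z (Cminus 1 z)) (Cmult (sum_n (fun u => Cmult (RtoC (binom (S a) u)) (M z n u)) a)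
           (sum_n (fun u => Cmult (RtoC (binom (S b) u)) (M z n u)) b)))) by cring end.
    set (m := S (a + b)).
    assert (Hm : (S a + S b = S m)%nat) by (unfold m; lia).
    set (PF := fun u v => binom (S a) u * binom (S b) v * Phi n u v).
    assert (HREST : Cmod REST <= r ^ m * (sum_n (fun u => sum_n (PF u) (S b)) a
                                         + sum_n (PF (S a)) b)).
    { unfold REST. eapply Rle_trans. apply Cmod_triangle.
      rewrite Rmult_plus_distr_l. apply Rplus_le_compat.
      - eapply Rle_trans. apply Cmod_sum. rewrite sumR_mult_l. apply sumR_le; intros u Hu.
        eapply Rle_trans. apply Cmod_sum. rewrite sumR_mult_l. apply sumR_le; intros v Hv.
        unfold c, PF. rewrite Cmod_mult, Cmod_RtoC_nonneg
          by (apply Rmult_le_pos; apply binom_ge0).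
        eapply Rle_trans. apply Rmult_le_compat_l. apply Rmult_le_pos; apply binom_ge0.
        apply IHn.
        replace (r ^ m * (binom (S a) u * binom (S b) v * Phi n u v))
          with ((binom (S a) u * binom (S b) v) * (r ^ m * Phi n u v)) by ring.
        apply Rmult_le_compat_l. apply Rmult_le_pos; apply binom_ge0.
        apply Rmult_le_compat_r. apply Phi_ge0. apply pow_mono_r; auto. unfold m; lia.
      - eapply Rle_trans. apply Cmod_sum. rewrite sumR_mult_l. apply sumR_le; intros v Hv.
        unfold c, PF. rewrite Cmod_mult, Cmod_RtoC_nonneg
          by (apply Rmult_le_pos; apply binom_ge0).
        eapply Rle_trans. apply Rmult_le_compat_l. apply Rmult_le_pos; apply binom_ge0.
        apply IHn.
        replace (r ^ m * (binom (S a) (S a) * binom (S b) v * Phi n (S a) v))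
          with ((binom (S a) (S a) * binom (S b) v) * (r ^ m * Phi n (S a) v)) by ring.
        apply Rmult_le_compat_l. apply Rmult_le_pos; apply binom_ge0.
        apply Rmult_le_compat_r. apply Phi_ge0. apply pow_mono_r; auto. unfold m; lia. }
    assert (HFULL : sum_n (fun u => sum_n (PF u) (S b)) (S a)
                    = 2 * INR n * Dr (INR n + 1) (S a) * Dr (INR n + 1) (S b)).
    { rewrite <- !Dr_sum. rewrite Rmult_assoc, sumR_mult_r, sumR_mult_l.
      apply sum_n_ext; intros u. rewrite sumR_mult_l, sumR_mult_l. apply sum_n_ext; intros v.
      unfold PF, Phi. rring. }
    rewrite (sum2_split (G:=R_AbelianMonoid) PF a b) in HFULL. change plus with Rplus in HFULL.
    pose proof (Pdiff_bound n a) as HPa. pose proof (Pdiff_bound n b) as HPb.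
    set (Da := Dr (INR n + 1) (S a)) in *. set (Db := Dr (INR n + 1) (S b)) in *.
    set (sA := sum_n (fun u => Cmult (RtoC (binom (S a) u)) (M z n u)) a) in *.
    set (sB := sum_n (fun u => Cmult (RtoC (binom (S b) u)) (M z n u)) b) in *.
    assert (HDa : 0 <= Da) by (apply Dr_ge0; pose proof (pos_INR n); lra).
    assert (HDb : 0 <= Db) by (apply Dr_ge0; pose proof (pos_INR n); lra).
    assert (HPhiS : Phi (S n) (S a) (S b) = 2 * (INR n + 1) * Da * Db).
    { unfold Phi, Da, Db. rewrite S_INR. reflexivity. }
    rewrite HPhiS, Hm.
    set (X1 := sum_n (fun u => sum_n (PF u) (S b)) a) in *.
    set (X2 := sum_n (PF (S a)) b) in *.
    assert (HPF : PF (S a) (S b) = Phi n (S a) (S b)) by (unfold PF; rewrite !binom_n_n; ring).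
    rewrite HPF in HFULL.
    specialize (IHn (S a) (S b)). rewrite Hm in IHn.
    eapply Rle_trans. apply Cmod_triangle.
    eapply Rle_trans. apply Rplus_le_compat. apply Cmod_triangle. rewrite !Cmod_mult. apply Rle_refl.
    assert (Hz1 : Cmod z * Cmod (Cminus 1 z) <= r * (1 + r)).
    { apply Rmult_le_compat; auto using Cmod_ge_0, Cmod_1mz. }
    assert (HAB : Cmod sA * Cmod sB <= (r ^ a * Da) * (r ^ b * Db))
      by (apply Rmult_le_compat; auto using Cmod_ge_0).
    assert (Hpos1 : 0 <= Cmod sA * Cmod sB) by (apply Rmult_le_pos; apply Cmod_ge_0).
    assert (H3 : Cmod z * Cmod (Cminus 1 z) * (Cmod sA * Cmod sB)
                 <= r * (1 + r) * ((r ^ a * Da) * (r ^ b * Db))).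
    { apply Rmult_le_compat; auto. apply Rmult_le_pos; apply Cmod_ge_0. }
    assert (H4 : Cmod z * Cmod REST <= r * (r ^ m * (X1 + X2)))
      by (apply Rmult_le_compat; auto using Cmod_ge_0).
    assert (Hrm : r ^ S m = r * r ^ m) by reflexivity.
    assert (Hram : r ^ m = r ^ a * r ^ b * r) by (unfold m; rewrite <- pow_add; simpl; ring).
    assert (Hkey : r * (1 + r) * ((r ^ a * Da) * (r ^ b * Db)) <= 2 * r ^ S m * Da * Db).
    { rewrite Hrm, Hram.
      replace (r * (1 + r) * (r ^ a * Da * (r ^ b * Db))) with ((1 + r) * (r * (r ^ a * r ^ b) * (Da * Db))) by ring.
      replace (2 * (r * (r ^ a * r ^ b * r)) * Da * Db) with ((2 * r) * (r * (r ^ a * r ^ b) * (Da * Db))) by ring.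
      apply Rmult_le_compat_r. repeat apply Rmult_le_pos; auto; lra. lra. }
    assert (Hfin : r ^ S m * Phi n (S a) (S b) + r * (r ^ m * (X1 + X2)) =
                   r ^ S m * (2 * INR n * Da * Db)).
    { rewrite Hrm. rewrite <- HFULL. ring. }
    replace (r ^ S m * (2 * (INR n + 1) * Da * Db)) with
      (r ^ S m * (2 * INR n * Da * Db) + 2 * r ^ S m * Da * Db) by ring.
    rewrite Cmod_mult. lra.
Qed.
End Bounds2.

Lemma Dr_lin x j : 1 <= x -> Dr x j * x <= INR j * x ^ j.
Proof.
  intros Hx. induction j.
  - unfold Dr. simpl. lra.
  - assert (E : Dr x (S j) = x * Dr x j + (x - 1) ^ j) by (unfold Dr; simpl; ring).
    rewrite E, S_INR. 
    assert ((x - 1) ^ j <= x ^ j) by (apply pow_incr; lra).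
    assert (0 <= x ^ j) by (apply pow_le; lra).
    simpl pow.
    replace ((x * Dr x j + (x - 1) ^ j) * x) with (x * (Dr x j * x) + x * (x - 1) ^ j) by ring.
    assert (x * (Dr x j * x) <= x * (INR j * x ^ j)) by (apply Rmult_le_compat_l; lra).
    assert (x * (x - 1) ^ j <= x * x ^ j) by (apply Rmult_le_compat_l; lra).
    nra.
Qed.

Lemma cpow_RtoC x p : cpow (RtoC x) p = RtoC (x ^ p).
Proof. induction p; simpl. reflexivity. rewrite IHp. now rewrite RtoC_mult. Qed.

Lemma cpow_add z a b : cpow z (a + b) = Cmult (cpow z a) (cpow z b).
Proof. induction a; simpl. cring. rewrite IHa. cring. Qed.

Definition ep (n p : nat) (k : nat) : C := cpow (RtoC (INR k / INR n)) p.

Lemma En_ep z n p : (1 <= n)%nat -> En z n (ep n p) = Cmult (RtoC (/ INR n ^ p)) (M z n p).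
Proof.
  intros Hn. unfold M. rewrite <- En_scal. apply En_ext. intros k. unfold ep.
  rewrite cpow_RtoC, <- RtoC_mult. f_equal. unfold Rdiv. rewrite Rpow_mult_distr, pow_inv. ring.
Qed.

Definition Xc z n (U V : nat -> C) : C :=
  Cminus (En z n (fun k => Cmult (U k) (V k))) (Cmult (En z n U) (En z n V)).

Lemma pair_bound z r n j l : 1 <= r -> Cmod z <= r -> (1 <= n)%nat ->
  Cmod (Xc z n (ep n j) (ep n l)) <= 2 * INR j * INR l * r ^ (j + l) / INR n.
Proof.
  intros Hr Hz Hn.
  assert (Hn1 : 1 <= INR n) by (apply (le_INR 1); auto).
  unfold Xc. rewrite (En_ext z n _ (ep n (j + l))) by (intros k; unfold ep; now rewrite cpow_add).
  rewrite !En_ep by auto.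
  replace (Cminus (Cmult (RtoC (/ INR n ^ (j + l))) (M z n (j + l)))
     (Cmult (Cmult (RtoC (/ INR n ^ j)) (M z n j)) (Cmult (RtoC (/ INR n ^ l)) (M z n l))))
   with (Cmult (RtoC (/ INR n ^ (j + l))) (Dl z n j l)).
  2:{ unfold Dl. rewrite pow_add, Rinv_mult, RtoC_mult. cring. }
  rewrite Cmod_mult, Cmod_RtoC_nonneg.
  2:{ apply Rlt_le, Rinv_0_lt_compat, pow_lt; lra. }
  eapply Rle_trans. apply Rmult_le_compat_l. apply Rlt_le, Rinv_0_lt_compat, pow_lt; lra.
  apply (Dl_bound z r Hr Hz).
  unfold Phi.
  pose proof (Dr_lin _ j Hn1). pose proof (Dr_lin _ l Hn1).
  pose proof (Dr_ge0 _ j Hn1). pose proof (Dr_ge0 _ l Hn1).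
  set (x := INR n) in *. set (dj := Dr x j) in *. set (dl := Dr x l) in *.
  assert (Hx0 : 0 < x) by lra.
  assert (Hxj : 0 < x ^ j) by (apply pow_lt; lra).
  assert (Hxl : 0 < x ^ l) by (apply pow_lt; lra).
  assert (Hrp : 0 <= r ^ (j + l)) by (apply pow_le; lra).
  rewrite pow_add.
  assert (Hprod : (dj * x) * (dl * x) <= (INR j * x ^ j) * (INR l * x ^ l)).
  { apply Rmult_le_compat; auto; apply Rmult_le_pos; lra. }
  apply (Rmult_le_reg_r (x * (x ^ j * x ^ l))). apply Rmult_lt_0_compat; auto. apply Rmult_lt_0_compat; auto.
  replace (/ (x ^ j * x ^ l) * (r ^ (j + l) * (2 * x * dj * dl)) * (x * (x ^ j * x ^ l)))
    with (2 * r ^ (j + l) * ((dj * x) * (dl * x))) by (field; split; lra).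
  replace (2 * INR j * INR l * r ^ (j + l) / x * (x * (x ^ j * x ^ l)))
    with (2 * r ^ (j + l) * ((INR j * x ^ j) * (INR l * x ^ l))) by (field; lra).
  apply Rmult_le_compat_l. lra. auto.
Qed.

Lemma Xc_ext z n U1 U2 V1 V2 : (forall k, U1 k = U2 k) -> (forall k, V1 k = V2 k) ->
  Xc z n U1 V1 = Xc z n U2 V2.
Proof.
  intros H1 H2. unfold Xc. rewrite (En_ext z n U1 U2), (En_ext z n V1 V2) by auto.
  rewrite (En_ext z n _ (fun k => Cmult (U2 k) (V2 k))) by (intros; now rewrite H1, H2). auto.
Qed.

Lemma Xc_plus_l z n U1 U2 V :
  Xc z n (fun k => Cplus (U1 k) (U2 k)) V = Cplus (Xc z n U1 V) (Xc z n U2 V).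
Proof.
  unfold Xc. rewrite (En_ext z n _ (fun k => Cplus (Cmult (U1 k) (V k)) (Cmult (U2 k) (V k))))
    by (intros; cring).
  rewrite !En_plus. cring.
Qed.

Lemma Xc_scal_l z n c U V : Xc z n (fun k => Cmult c (U k)) V = Cmult c (Xc z n U V).
Proof.
  unfold Xc. rewrite (En_ext z n _ (fun k => Cmult c (Cmult (U k) (V k)))) by (intros; cring).
  rewrite !En_scal. cring.
Qed.

Lemma Xc_plus_r z n U V1 V2 :
  Xc z n U (fun k => Cplus (V1 k) (V2 k)) = Cplus (Xc z n U V1) (Xc z n U V2).
Proof.
  unfold Xc. rewrite (En_ext z n _ (fun k => Cplus (Cmult (U k) (V1 k)) (Cmult (U k) (V2 k))))
    by (intros; cring).
  rewrite !En_plus. cring.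
Qed.

Lemma Xc_scal_r z n c U V : Xc z n U (fun k => Cmult c (V k)) = Cmult c (Xc z n U V).
Proof.
  unfold Xc. rewrite (En_ext z n _ (fun k => Cmult c (Cmult (U k) (V k)))) by (intros; cring).
  rewrite !En_scal. cring.
Qed.

Lemma trunc_l z n (a : nat -> C) (E : nat -> nat -> C) V J :
  Cmod (Xc z n (fun k => sum_n (fun j => Cmult (a j) (E j k)) J) V)
  <= sum_n (fun j => Cmod (a j) * Cmod (Xc z n (E j) V)) J.
Proof.
  induction J.
  - rewrite sumR_O. rewrite (Xc_ext z n _ (fun k => Cmult (a O) (E O k)) V V)
      by (intros; auto; apply sumC_O).
    rewrite Xc_scal_l, Cmod_mult. lra.
  - rewrite sumR_Sn.
    rewrite (Xc_ext z n _ (fun k => Cplus (sum_n (fun j => Cmult (a j) (E j k)) J) (Cmult (a (S J)) (E (S J) k))) V V)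
      by (intros; auto; apply sumC_Sn).
    rewrite Xc_plus_l, Xc_scal_l. eapply Rle_trans. apply Cmod_triangle.
    rewrite Cmod_mult. lra.
Qed.

Lemma trunc_r z n (b : nat -> C) (E : nat -> nat -> C) U J :
  Cmod (Xc z n U (fun k => sum_n (fun j => Cmult (b j) (E j k)) J))
  <= sum_n (fun j => Cmod (b j) * Cmod (Xc z n U (E j))) J.
Proof.
  induction J.
  - rewrite sumR_O. rewrite (Xc_ext z n U U _ (fun k => Cmult (b O) (E O k)))
      by (intros; auto; apply sumC_O).
    rewrite Xc_scal_r, Cmod_mult. lra.
  - rewrite sumR_Sn.
    rewrite (Xc_ext z n U U _ (fun k => Cplus (sum_n (fun j => Cmult (b j) (E j k)) J) (Cmult (b (S J)) (E (S J) k))))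
      by (intros; auto; apply sumC_Sn).
    rewrite Xc_plus_r, Xc_scal_r. eapply Rle_trans. apply Cmod_triangle.
    rewrite Cmod_mult. lra.
Qed.

Lemma trunc_bound z r n (a b : nat -> C) J : 1 <= r -> Cmod z <= r -> (1 <= n)%nat ->
  Cmod (Xc z n (fun k => sum_n (fun j => Cmult (a j) (ep n j k)) J)
               (fun k => sum_n (fun j => Cmult (b j) (ep n j k)) J))
  <= 2 / INR n * (sum_n (fun j => INR j * Cmod (a j) * r ^ j) J)
               * (sum_n (fun j => INR j * Cmod (b j) * r ^ j) J).
Proof.
  intros Hr Hz Hn.
  assert (Hn1 : 1 <= INR n) by (apply (le_INR 1); auto).
  eapply Rle_trans. apply trunc_l.
  rewrite Rmult_assoc, sumR_mult_r, sumR_mult_l. apply sumR_le. intros j Hj.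
  eapply Rle_trans. apply Rmult_le_compat_l. apply Cmod_ge_0. apply trunc_r.
  repeat rewrite sumR_mult_l. apply sumR_le. intros l Hl.
  eapply Rle_trans. apply Rmult_le_compat_l. apply Cmod_ge_0.
  apply Rmult_le_compat_l. apply Cmod_ge_0. apply (pair_bound z r n j l Hr Hz Hn).
  rewrite pow_add. right. field. lra.
Qed.


Lemma partial_le_Series (a : nat -> R) J : (forall k, 0 <= a k) -> ex_series a -> sum_n a J <= Series a.
Proof.
  intros Hpos Hex. apply (is_lim_seq_incr_compare (sum_n a)).
  apply (Series_correct a Hex).
  intros n. rewrite sum_Sn. change plus with Rplus. specialize (Hpos (S n)). lra.
Qed.

Lemma lim_ratio : is_lim_seq (fun n => (INR n + 2) / (INR n + 1)) 1.
Proof.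
  apply is_lim_seq_ext with (fun n => 1 + / (INR n + 1)).
  { intros n. assert (0 < INR n + 1) by (pose proof (pos_INR n); lra). field. lra. }
  replace (Finite 1) with (Rbar_plus 1 (Rbar_inv p_infty)) by (simpl; now rewrite Rplus_0_r).
  apply is_lim_seq_plus with 1 (Rbar_inv p_infty). apply is_lim_seq_const.
  apply is_lim_seq_inv. eapply is_lim_seq_plus. apply is_lim_seq_INR. apply is_lim_seq_const.
  reflexivity. discriminate. reflexivity.
Qed.

Lemma ex_series_poly q : 0 < q < 1 -> ex_series (fun n => (INR n + 1) ^ 2 * q ^ n).
Proof.
  intros Hq.
  apply ex_series_ext with (fun n => Rabs ((INR n + 1) ^ 2 * q ^ n)).
  { intros n. rewrite Rabs_pos_eq; auto. apply Rmult_le_pos. apply pow_le; pose proof (pos_INR n); lra.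
    apply pow_le; lra. }
  apply ex_series_DAlembert with q. lra.
  { intros n. apply Rmult_integral_contrapositive. split; apply pow_nonzero.
    pose proof (pos_INR n); lra. lra. }
  apply is_lim_seq_ext with (fun n => ((INR n + 2) / (INR n + 1)) * ((INR n + 2) / (INR n + 1)) * q).
  { intros n. rewrite S_INR. assert (0 < INR n + 1) by (pose proof (pos_INR n); lra).
    assert (q ^ n <> 0) by (apply pow_nonzero; lra).
    rewrite Rabs_pos_eq. simpl. field. repeat split; lra.
    apply Rle_trans with (((INR n + 2) / (INR n + 1)) * ((INR n + 2) / (INR n + 1)) * q).
    apply Rmult_le_pos; [|lra]. apply Rmult_le_pos; apply Rlt_le, Rdiv_lt_0_compat; lra.
    right. simpl. field. repeat split; lra. }
  replace (Finite q) with (Finite (1 * 1 * q)) by (f_equal; ring).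
  apply is_lim_seq_mult'. apply is_lim_seq_mult'; apply lim_ratio. apply is_lim_seq_const.
Qed.

Lemma sqrt2_lt2 : sqrt 2 < 2.
Proof.
  pose proof (sqrt_pos 2). pose proof (sqrt_sqrt 2 ltac:(lra)). nra.
Qed.

Lemma series_close (u : nat -> C) l : is_series u l ->
  forall eps, 0 < eps -> exists N, forall J, (N <= J)%nat -> Cmod (Cminus (sum_n u J) l) < eps.
Proof.
  intros H eps Heps.
  assert (He2 : 0 < eps / 2) by lra.
  destruct (proj1 (filterlim_locally _ _) H (mkposreal _ He2)) as [N HN].
  exists N. intros J HJ. specialize (HN J HJ). apply C_NormedModule_mixin_compat2 in HN.
  pose proof sqrt2_lt2.
  assert (sqrt 2 * (eps / 2) < eps). { assert (0 < sqrt 2) by (apply sqrt_lt_R0; lra). nra. }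
  change (Cmod (Cminus (sum_n u J) l) < sqrt 2 * (eps / 2)) in HN. lra.
Qed.

Lemma series_terms_bounded (u : nat -> C) l : is_series u l ->
  exists N, forall k, (N <= k)%nat -> Cmod (u k) <= 2.
Proof.
  intros H. destruct (series_close u l H 1 Rlt_0_1) as [N HN].
  exists (S N). intros k Hk. destruct k as [|k]. lia.
  assert (E : u (S k) = Cminus (Cminus (sum_n u (S k)) l) (Cminus (sum_n u k) l)).
  { rewrite sum_Sn. change plus with Cplus. unfold Cminus. ring. }
  rewrite E. unfold Cminus at 1. eapply Rle_trans. apply Cmod_triangle. rewrite Cmod_opp.
  pose proof (HN (S k) ltac:(lia)). pose proof (HN k ltac:(lia)). lra.
Qed.

Lemma ex_weighted (a : nat -> C) f Rad r : 1 <= r -> r < Rad -> power_series_on Rad a f ->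
  ex_series (fun j => (INR j + 1) ^ 2 * Cmod (a j) * r ^ j).
Proof.
  intros Hr HR Hps.
  set (rho := (r + Rad) / 2).
  assert (Hrho : r < rho < Rad) by (unfold rho; lra).
  assert (Hc : Cmod (RtoC rho) < Rad) by (rewrite Cmod_R, Rabs_pos_eq; lra).
  assert (Hs := Hps (RtoC rho) Hc).
  destruct (series_terms_bounded _ _ Hs) as [N HN].
  set (q := r / rho).
  assert (Hq : 0 < q < 1).
  { unfold q. split. apply Rdiv_lt_0_compat; lra. apply (Rmult_lt_reg_r rho); [lra|]. unfold Rdiv. rewrite Rmult_assoc, Rinv_l; lra. }
  apply (proj2 (ex_series_incr_n _ N)).
  apply (@ex_series_le R_AbsRing R_CompleteNormedModule) with (fun k => 2 * ((INR (N + k) + 1) ^ 2 * q ^ (N + k))).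
  - intros k. change norm with Rabs. 
    specialize (HN (N + k)%nat ltac:(lia)).
    rewrite Cmod_mult, cpow_RtoC, Cmod_R, Rabs_pos_eq in HN by (apply pow_le; lra).
    assert (0 <= (INR (N + k) + 1) ^ 2) by (apply pow_le; pose proof (pos_INR (N+k)); lra).
    rewrite Rabs_pos_eq.
    2:{ apply Rmult_le_pos. apply Rmult_le_pos; auto. apply Cmod_ge_0. apply pow_le; lra. }
    assert (E : r ^ (N + k) = rho ^ (N + k) * q ^ (N + k)).
    { unfold q. rewrite <- Rpow_mult_distr. f_equal. field. lra. }
    rewrite E.
    assert (0 <= q ^ (N + k)) by (apply pow_le; lra).
    replace ((INR (N + k) + 1) ^ 2 * Cmod (a (N + k)%nat) * (rho ^ (N + k) * q ^ (N + k)))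
      with (((INR (N + k) + 1) ^ 2 * q ^ (N + k)) * (Cmod (a (N + k)%nat) * rho ^ (N + k))) by ring.
    rewrite (Rmult_comm 2). apply Rmult_le_compat_l. apply Rmult_le_pos; auto. auto.
  - apply ex_series_scal_l with (c := 2) (a := fun k => (INR (N + k) + 1) ^ 2 * q ^ (N + k)).
    apply (proj1 (ex_series_incr_n (fun k => (INR k + 1) ^ 2 * q ^ k) N)).
    apply ex_series_poly; auto.
Qed.

Definition A2 (a : nat -> C) r j := (INR j + 1) ^ 2 * Cmod (a j) * r ^ j.
Definition al (a : nat -> C) r j := INR j * Cmod (a j) * r ^ j.

Lemma A2_ge0 a r j : 1 <= r -> 0 <= A2 a r j.
Proof. intros. unfold A2. apply Rmult_le_pos. apply Rmult_le_pos. apply pow_le.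
  pose proof (pos_INR j); lra. apply Cmod_ge_0. apply pow_le; lra. Qed.

Lemma al_ge0 a r j : 1 <= r -> 0 <= al a r j.
Proof. intros. unfold al. apply Rmult_le_pos. apply Rmult_le_pos. apply pos_INR.
  apply Cmod_ge_0. apply pow_le; lra. Qed.

Lemma al_le_A2 a r j : 1 <= r -> al a r j <= A2 a r j.
Proof.
  intros. unfold al, A2. apply Rmult_le_compat_r. apply pow_le; lra.
  apply Rmult_le_compat_r. apply Cmod_ge_0. pose proof (pos_INR j). nra.
Qed.

Lemma ex_al a r : 1 <= r -> ex_series (A2 a r) -> ex_series (al a r).
Proof.
  intros Hr H. apply (@ex_series_le R_AbsRing R_CompleteNormedModule) with (A2 a r); auto.
  intros j. change norm with Rabs. rewrite Rabs_pos_eq by (apply al_ge0; auto). apply al_le_A2; auto.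
Qed.

Lemma ex_abs (u : nat -> R) : (forall k, 0 <= u k) -> ex_series u -> ex_series (fun k => Rabs (u k)).
Proof. intros H1 H2. apply ex_series_ext with u; auto. intros; rewrite Rabs_pos_eq; auto. Qed.

Lemma bound_term_ge0 a b r m : 1 <= r -> 0 <= bound_term a b r m.
Proof.
  intros. unfold bound_term. apply Rmult_le_pos. apply Rmult_le_pos. apply pow_le, pos_INR.
  apply sumR_ge0. intros; apply Rmult_le_pos; apply Cmod_ge_0. apply pow_le; lra.
Qed.

Lemma ex_bound_term a b r : 1 <= r -> ex_series (A2 a r) -> ex_series (A2 b r) ->
  ex_series (bound_term a b r).
Proof.
  intros Hr Ha Hb.
  assert (HM := is_series_mult (A2 a r) (A2 b r) _ _ (Series_correct _ Ha) (Series_correct _ Hb)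
     (ex_abs _ (fun k => A2_ge0 a r k Hr) Ha) (ex_abs _ (fun k => A2_ge0 b r k Hr) Hb)).
  apply (@ex_series_le R_AbsRing R_CompleteNormedModule) with
     (fun m => sum_f_R0 (fun k => A2 a r k * A2 b r (m - k)) m).
  2:{ eexists; exact HM. }
  intros m. change norm with Rabs. rewrite Rabs_pos_eq by (apply bound_term_ge0; auto).
  rewrite <- sum_n_Reals. unfold bound_term.
  rewrite (Rmult_comm (INR m ^ 2)), Rmult_assoc, sumR_mult_r. apply sumR_le. intros j Hj.
  unfold A2. rewrite minus_INR by auto.
  assert (Hm : INR m <= (INR j + 1) * (INR m - INR j + 1)).
  { assert (INR j <= INR m) by (apply le_INR; auto). pose proof (pos_INR j). nra. }
  assert (Hm0 : 0 <= INR m) by apply pos_INR.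
  assert (Hm2 : INR m ^ 2 <= (INR j + 1) ^ 2 * (INR m - INR j + 1) ^ 2).
  { rewrite <- Rpow_mult_distr. apply pow_incr. lra. }
  assert (Hrr : r ^ (m - 1) <= r ^ j * r ^ (m - j)).
  { rewrite <- pow_add. replace (j + (m - j))%nat with m by lia. apply pow_mono_r; auto; lia. }
  replace ((INR j + 1) ^ 2 * Cmod (a j) * r ^ j * ((INR m - INR j + 1) ^ 2 * Cmod (b (m - j)%nat) * r ^ (m - j)))
    with (((INR j + 1) ^ 2 * (INR m - INR j + 1) ^ 2) * (r ^ j * r ^ (m - j)) * (Cmod (a j) * Cmod (b (m - j)%nat))) by ring.
  replace (Cmod (a j) * Cmod (b (m - j)%nat) * (INR m ^ 2 * r ^ (m - 1)))
    with (INR m ^ 2 * r ^ (m - 1) * (Cmod (a j) * Cmod (b (m - j)%nat))) by ring.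
  apply Rmult_le_compat_r. apply Rmult_le_pos; apply Cmod_ge_0.
  apply Rmult_le_compat; auto. apply pow_le; auto. apply pow_le; lra.
Qed.

Lemma final_compare a b r : 1 <= r -> ex_series (A2 a r) -> ex_series (A2 b r) ->
  2 * Series (al a r) * Series (al b r) <= 6 * (1 + r) * Series (bound_term a b r).
Proof.
  intros Hr Ha Hb.
  pose proof (ex_al a r Hr Ha) as Ha'. pose proof (ex_al b r Hr Hb) as Hb'.
  assert (HM := is_series_mult (al a r) (al b r) _ _ (Series_correct _ Ha') (Series_correct _ Hb')
     (ex_abs _ (fun k => al_ge0 a r k Hr) Ha') (ex_abs _ (fun k => al_ge0 b r k Hr) Hb')).
  apply is_series_unique in HM.
  rewrite Rmult_assoc, <- HM, <- !Series_scal_l.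
  pose proof (ex_bound_term a b r Hr Ha Hb) as HB.
  apply Series_le.
  2:{ apply ex_series_scal_l with (c := 6 * (1 + r)) (a := bound_term a b r). auto. }
  intros m. rewrite <- sum_n_Reals. split.
  { apply Rmult_le_pos. lra. apply sumR_ge0. intros. apply Rmult_le_pos; apply al_ge0; auto. }
  unfold bound_term. destruct m as [|m].
  { rewrite !sumR_O. unfold al. simpl. lra. }
  replace (S m - 1)%nat with m by lia.
  rewrite sumR_mult_l.
  match goal with |- _ <= ?R => replace R with
    (sum_n (fun j => Cmod (a j) * Cmod (b (S m - j)%nat) * (6 * (1 + r) * (INR (S m) ^ 2 * r ^ m))) (S m)) end.
  2:{ rewrite <- (sumR_mult_r (6 * (1 + r) * (INR (S m) ^ 2 * r ^ m)) (fun j => Cmod (a j) * Cmod (b (S m - j)%nat))).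
      rring. }
  apply sumR_le. intros j Hj. unfold al.
  assert (H1 : INR j <= INR (S m)) by (apply le_INR; lia).
  assert (H2 : INR (S m - j) <= INR (S m)) by (apply le_INR; lia).
  pose proof (pos_INR j). pose proof (pos_INR (S m - j)).
  assert (Hjm : INR j * INR (S m - j) <= INR (S m) ^ 2) by (replace (INR (S m) ^ 2) with (INR (S m) * INR (S m)) by ring; apply Rmult_le_compat; auto).
  assert (Hrr : r ^ j * r ^ (S m - j) = r * r ^ m).
  { rewrite <- pow_add. replace (j + (S m - j))%nat with (S m) by lia. reflexivity. }
  assert (0 <= r ^ m) by (apply pow_le; lra).
  assert (0 <= Cmod (a j) * Cmod (b (S m - j)%nat)) by (apply Rmult_le_pos; apply Cmod_ge_0).
  assert (E : 2 * (INR j * Cmod (a j) * r ^ j * (INR (S m - j) * Cmod (b (S m - j)%nat) * r ^ (S m - j)))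
    = (2 * (INR j * INR (S m - j)) * r) * r ^ m * (Cmod (a j) * Cmod (b (S m - j)%nat))).
  { transitivity (2 * (INR j * INR (S m - j)) * (r ^ j * r ^ (S m - j)) * (Cmod (a j) * Cmod (b (S m - j)%nat))).
    ring. rewrite Hrr; ring. }
  rewrite E.
  replace (Cmod (a j) * Cmod (b (S m - j)%nat) * (6 * (1 + r) * (INR (S m) ^ 2 * r ^ m)))
    with ((6 * (1 + r) * INR (S m) ^ 2) * r ^ m * (Cmod (a j) * Cmod (b (S m - j)%nat))) by ring.
  apply Rmult_le_compat_r; auto. apply Rmult_le_compat_r; auto.
  assert (0 <= INR j * INR (S m - j)) by nra.
  nra.
Qed.


Definition Wt z n := sum_n (fun k => Cmod (Cmult (RtoC (binom n k))
                   (Cmult (cpow z k) (cpow (Cminus 1%C z) (n - k))))) n.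

Lemma Wt_ge0 z n : 0 <= Wt z n.
Proof. apply sumR_ge0. intros; apply Cmod_ge_0. Qed.

Lemma En_bound z n h c : (forall k, (k <= n)%nat -> Cmod (h k) <= c) -> Cmod (En z n h) <= Wt z n * c.
Proof.
  intros H. unfold En, Wt. eapply Rle_trans. apply Cmod_sum. rewrite sumR_mult_r.
  apply sumR_le. intros i Hi.
  replace (Cmult (RtoC (binom n i)) (Cmult (cpow z i) (Cmult (cpow (Cminus 1%C z) (n - i)) (h i))))
    with (Cmult (Cmult (RtoC (binom n i)) (Cmult (cpow z i) (cpow (Cminus 1%C z) (n - i)))) (h i)) by cring.
  rewrite (Cmod_mult _ (h i)). apply Rmult_le_compat_l. apply Cmod_ge_0. auto.
Qed.

Lemma En_minus z n h1 h2 : En z n (fun k => Cminus (h1 k) (h2 k)) = Cminus (En z n h1) (En z n h2).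
Proof.
  rewrite (En_ext z n _ (fun k => Cplus (h1 k) (Cmult (-1)%C (h2 k)))) by (intros; cring).
  rewrite En_plus, En_scal. cring.
Qed.

Lemma Cmod_minus_sym x y : Cmod (Cminus x y) = Cmod (Cminus y x).
Proof. replace (Cminus x y) with (Copp (Cminus y x)) by cring. apply Cmod_opp. Qed.

Lemma Xc_cont z n U V U' V' K d : 0 <= d <= 1 ->
  (forall k, (k <= n)%nat -> Cmod (U k) <= K /\ Cmod (V k) <= K /\
        Cmod (Cminus (U' k) (U k)) <= d /\ Cmod (Cminus (V' k) (V k)) <= d) ->
  Cmod (Cminus (Xc z n U V) (Xc z n U' V')) <= d * ((2 * K + 1) * (Wt z n + Wt z n * Wt z n)).
Proof.
  intros Hd H.
  assert (HK : 0 <= K) by (destruct (H O ltac:(lia)) as [H1 _]; pose proof (Cmod_ge_0 (U O)); lra).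
  assert (HW := Wt_ge0 z n).
  unfold Xc.
  replace (Cminus (Cminus (En z n (fun k => Cmult (U k) (V k))) (Cmult (En z n U) (En z n V)))
    (Cminus (En z n (fun k => Cmult (U' k) (V' k))) (Cmult (En z n U') (En z n V'))))
   with (Cminus (Cminus (En z n (fun k => Cmult (U k) (V k))) (En z n (fun k => Cmult (U' k) (V' k))))
      (Cplus (Cmult (Cminus (En z n U) (En z n U')) (En z n V))
             (Cmult (En z n U') (Cminus (En z n V) (En z n V'))))) by cring.
  rewrite <- !En_minus.
  unfold Cminus at 1. eapply Rle_trans. apply Cmod_triangle. rewrite Cmod_opp.
  eapply Rle_trans. apply Rplus_le_compat. 
  { apply En_bound with (c := d * (2 * K + 1)). intros k Hk. destruct (H k Hk) as (H1 & H2 & H3 & H4).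
    replace (Cminus (Cmult (U k) (V k)) (Cmult (U' k) (V' k)))
      with (Cplus (Cmult (Cminus (U k) (U' k)) (V k)) (Cmult (U' k) (Cminus (V k) (V' k)))) by cring.
    eapply Rle_trans. apply Cmod_triangle. rewrite !Cmod_mult.
    rewrite (Cmod_minus_sym (U k)), (Cmod_minus_sym (V k)).
    assert (HU' : Cmod (U' k) <= K + 1).
    { replace (U' k) with (Cplus (U k) (Cminus (U' k) (U k))) by cring.
      eapply Rle_trans. apply Cmod_triangle. lra. }
    assert (Cmod (Cminus (U' k) (U k)) * Cmod (V k) <= d * K)
      by (apply Rmult_le_compat; auto using Cmod_ge_0).
    assert (Cmod (U' k) * Cmod (Cminus (V' k) (V k)) <= (K + 1) * d)
      by (apply Rmult_le_compat; auto using Cmod_ge_0).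
    nra. }
  { eapply Rle_trans. apply Cmod_triangle. rewrite !Cmod_mult.
    assert (E1 : Cmod (En z n (fun k => Cminus (U k) (U' k))) <= Wt z n * d).
    { apply En_bound. intros k Hk. destruct (H k Hk) as (H1 & H2 & H3 & H4).
      rewrite Cmod_minus_sym. auto. }
    assert (E2 : Cmod (En z n (fun k => Cminus (V k) (V' k))) <= Wt z n * d).
    { apply En_bound. intros k Hk. destruct (H k Hk) as (H1 & H2 & H3 & H4).
      rewrite Cmod_minus_sym. auto. }
    assert (E3 : Cmod (En z n V) <= Wt z n * K).
    { apply En_bound. intros k Hk. destruct (H k Hk) as (H1 & H2 & H3 & H4). auto. }
    assert (E4 : Cmod (En z n U') <= Wt z n * (K + 1)).
    { apply En_bound. intros k Hk. destruct (H k Hk) as (H1 & H2 & H3 & H4).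
      replace (U' k) with (Cplus (U k) (Cminus (U' k) (U k))) by cring.
      eapply Rle_trans. apply Cmod_triangle. lra. }
    apply Rplus_le_compat. apply Rmult_le_compat; eauto using Cmod_ge_0.
    apply Rmult_le_compat; eauto using Cmod_ge_0. }
  nra.
Qed.

Lemma uniform_close (u : nat -> nat -> C) (L : nat -> C) n :
  (forall k, (k <= n)%nat -> is_series (u k) (L k)) ->
  forall d, 0 < d -> exists N, forall J, (N <= J)%nat -> forall k, (k <= n)%nat ->
    Cmod (Cminus (sum_n (u k) J) (L k)) < d.
Proof.
  intros H d Hd. induction n.
  - destruct (series_close _ _ (H O (le_n _)) d Hd) as [N HN]. exists N.
    intros J HJ k Hk. replace k with O by lia. auto.
  - destruct IHn as [N1 HN1]. intros; apply H; lia.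
    destruct (series_close _ _ (H (S n) (le_n _)) d Hd) as [N2 HN2].
    exists (Nat.max N1 N2). intros J HJ k Hk.
    destruct (Nat.eq_dec k (S n)) as [->|Hne]. apply HN2; lia. apply HN1; lia.
Qed.

Lemma term_le_sum (f : nat -> R) m i : (forall k, 0 <= f k) -> (i <= m)%nat -> f i <= sum_n f m.
Proof.
  intros Hf Hi. induction m.
  - replace i with O by lia. rewrite sumR_O. lra.
  - rewrite sumR_Sn. destruct (Nat.eq_dec i (S m)) as [->|Hne].
    + pose proof (sumR_ge0 f m (fun k _ => Hf k)). lra.
    + specialize (IHm ltac:(lia)). specialize (Hf (S m)). lra.
Qed.

Lemma bern_En n h z : bernstein n h z = En z n (fun k => h (RtoC (INR k / INR n))).
Proof.
  unfold bernstein, En. apply sum_n_ext_loc. intros k Hk. rewrite binom_C by auto. reflexivity.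
Qed.

Theorem theorem4p1 (R0 : R) (f g : C -> C) (a b : nat -> C) (r : R) :
  1 < R0 ->
  power_series_on R0 a f ->
  power_series_on R0 b g ->
  1 <= r -> r < R0 ->
  ex_series (bound_term a b r) /\
  forall n : nat, (1 <= n)%nat ->
    Rbar_le
      (sup_norm r (fun z => Cminus (bernstein n (fun w => Cmult (f w) (g w)) z)
                                   (Cmult (bernstein n f z) (bernstein n g z))))
      (Finite (6 * (1 + r) / INR n * Series (bound_term a b r))).
Proof.
  rename R0 into Rad. intros HR Hf Hg Hr HrR.
  pose proof (ex_weighted a f Rad r Hr HrR Hf) as Ha.
  pose proof (ex_weighted b g Rad r Hr HrR Hg) as Hb.
  fold (A2 a r) in Ha. fold (A2 b r) in Hb.
  split. apply ex_bound_term; auto.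
  intros n Hn.
  assert (Hn1 : 1 <= INR n) by (apply (le_INR 1); auto).
  unfold sup_norm. destruct (Lub_Rbar_correct
     (fun t => exists z : C, Cmod z <= r /\ t = Cmod (Cminus (bernstein n (fun w => Cmult (f w) (g w)) z)
                                   (Cmult (bernstein n f z) (bernstein n g z))))) as [_ Hlub].
  apply Hlub. intros t [z [Hz ->]]. simpl.
  set (Aa := Series (al a r)). set (Bb := Series (al b r)).
  assert (HAa : 0 <= Aa) by (unfold Aa; rewrite <- (sumR_O (al a r));
     apply partial_le_Series; [intros; apply al_ge0; auto | apply ex_al; auto]
     || (apply Rle_trans with (sum_n (al a r) 0); [rewrite sumR_O; apply al_ge0; auto|
        apply partial_le_Series; [intros; apply al_ge0; auto | apply ex_al; auto]])).
  assert (HBb : 0 <= Bb) by (apply Rle_trans with (sum_n (al b r) 0); [rewrite sumR_O; apply al_ge0; auto|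
        apply partial_le_Series; [intros; apply al_ge0; auto | apply ex_al; auto]]).
  assert (Hfin : 2 / INR n * Aa * Bb <= 6 * (1 + r) / INR n * Series (bound_term a b r)).
  { pose proof (final_compare a b r Hr Ha Hb). fold Aa Bb in H.
    unfold Rdiv. replace (2 * / INR n * Aa * Bb) with (/ INR n * (2 * Aa * Bb)) by ring.
    replace (6 * (1 + r) * / INR n * Series (bound_term a b r))
      with (/ INR n * (6 * (1 + r) * Series (bound_term a b r))) by ring.
    apply Rmult_le_compat_l. apply Rlt_le, Rinv_0_lt_compat; lra. auto. }
  eapply Rle_trans; [|exact Hfin].
  rewrite !bern_En. fold (Xc z n (fun k => f (RtoC (INR k / INR n))) (fun k => g (RtoC (INR k / INR n)))).
  set (U := fun k => f (RtoC (INR k / INR n))). set (V := fun k => g (RtoC (INR k / INR n))).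
  apply le_epsilon. intros eps Heps.
  assert (Hxk : forall k, (k <= n)%nat -> Cmod (RtoC (INR k / INR n)) < Rad).
  { intros k Hk. rewrite Cmod_R, Rabs_pos_eq.
    2:{ apply Rmult_le_pos. apply pos_INR. apply Rlt_le, Rinv_0_lt_compat; lra. }
    assert (INR k <= INR n) by (apply le_INR; auto).
    apply Rle_lt_trans with 1; [|lra]. apply (Rmult_le_reg_r (INR n)); [lra|].
    unfold Rdiv. rewrite Rmult_assoc, Rinv_l; lra. }
  set (K := sum_n (fun k => Cmod (U k) + Cmod (V k)) n).
  set (C0 := (2 * K + 1) * (Wt z n + Wt z n * Wt z n)).
  assert (HK : 0 <= K) by (apply sumR_ge0; intros; pose proof (Cmod_ge_0 (U i)); pose proof (Cmod_ge_0 (V i)); lra).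
  assert (HC0 : 0 <= C0) by (unfold C0; pose proof (Wt_ge0 z n); apply Rmult_le_pos; nra).
  set (d := Rmin 1 (eps / (C0 + 1))).
  assert (Hd0 : 0 < d) by (apply Rmin_pos; [lra | apply Rdiv_lt_0_compat; lra]).
  assert (Hd1 : d <= 1) by apply Rmin_l.
  assert (HdC : d * C0 <= eps).
  { apply Rle_trans with (eps / (C0 + 1) * C0). apply Rmult_le_compat_r; auto. apply Rmin_r.
    apply (Rmult_le_reg_r (C0 + 1)); [lra|]. unfold Rdiv.
    replace (eps * / (C0 + 1) * C0 * (C0 + 1)) with (eps * C0) by (field; lra). nra. }
  destruct (uniform_close (fun k j => Cmult (a j) (cpow (RtoC (INR k / INR n)) j)) U n
     (fun k Hk => Hf _ (Hxk k Hk)) d Hd0) as [N1 HN1].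
  destruct (uniform_close (fun k j => Cmult (b j) (cpow (RtoC (INR k / INR n)) j)) V n
     (fun k Hk => Hg _ (Hxk k Hk)) d Hd0) as [N2 HN2].
  set (J := Nat.max N1 N2).
  set (F := fun k => sum_n (fun j => Cmult (a j) (ep n j k)) J).
  set (G := fun k => sum_n (fun j => Cmult (b j) (ep n j k)) J).
  assert (Hc := Xc_cont z n U V F G K d (conj (Rlt_le _ _ Hd0) Hd1)).
  assert (Hc' : Cmod (Cminus (Xc z n U V) (Xc z n F G)) <= d * C0).
  { apply Hc. intros k Hk. repeat split.
    - apply Rle_trans with (Cmod (U k) + Cmod (V k)). pose proof (Cmod_ge_0 (V k)); lra.
      apply (term_le_sum (fun k => Cmod (U k) + Cmod (V k))); auto.
      intros; pose proof (Cmod_ge_0 (U k0)); pose proof (Cmod_ge_0 (V k0)); lra.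
    - apply Rle_trans with (Cmod (U k) + Cmod (V k)). pose proof (Cmod_ge_0 (U k)); lra.
      apply (term_le_sum (fun k => Cmod (U k) + Cmod (V k))); auto.
      intros; pose proof (Cmod_ge_0 (U k0)); pose proof (Cmod_ge_0 (V k0)); lra.
    - apply Rlt_le. apply (HN1 J ltac:(unfold J; lia) k Hk).
    - apply Rlt_le. apply (HN2 J ltac:(unfold J; lia) k Hk). }
  assert (Ht := trunc_bound z r n a b J Hr Hz Hn). fold F G in Ht.
  assert (HAJ : sum_n (al a r) J <= Aa)
    by (apply partial_le_Series; [intros; apply al_ge0; auto | apply ex_al; auto]).
  assert (HBJ : sum_n (al b r) J <= Bb)
    by (apply partial_le_Series; [intros; apply al_ge0; auto | apply ex_al; auto]).
  assert (HAJ0 : 0 <= sum_n (al a r) J) by (apply sumR_ge0; intros; apply al_ge0; auto).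
  assert (HBJ0 : 0 <= sum_n (al b r) J) by (apply sumR_ge0; intros; apply al_ge0; auto).
  assert (Ht' : Cmod (Xc z n F G) <= 2 / INR n * Aa * Bb).
  { eapply Rle_trans. exact Ht. unfold al in HAJ, HBJ, HAJ0, HBJ0.
    assert (0 <= 2 / INR n) by (apply Rmult_le_pos; [lra | apply Rlt_le, Rinv_0_lt_compat; lra]).
    rewrite Rmult_assoc, (Rmult_assoc (2 / INR n)). apply Rmult_le_compat_l; auto.
    apply Rmult_le_compat; auto. }
  replace (Xc z n U V) with (Cplus (Cminus (Xc z n U V) (Xc z n F G)) (Xc z n F G)) by cring.
  eapply Rle_trans. apply Cmod_triangle. lra.
Qed.
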